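(* Let $\alpha\in\mathbb{R}$, $\beta\in(0,1)$ and $\sigma\in\mathbb{R}\setminus\{0,1\}$. Let $J\subset(0,\infty)$ be an open interval such that $1+\alpha\sigma q>0$ and $|\alpha\sigma q|<1$ for all $q\in J$. Let $u:J\to\mathbb{R}$ be twice differentiable with $u'(q)>0$ for all $q\in J$. Then $u$ has linear fractional relative risk aversion on $J$, i.e. $$-\frac{q\,u''(q)}{u'(q)}=\frac{\alpha q+\beta}{\alpha\sigma q+1}\quad\text{for all } q\in J,$$ if and only if there exist constants $K>0$ and $C\in\mathbb{R}$ such that for all $q\in J$ $$u(q)=\frac{K\sigma}{\sigma-1}\,(1+\alpha\sigma q)^{\beta-\frac{1}{\sigma}}\,q^{1-\beta}\left[1+\frac{\beta-\frac{1}{\sigma}}{1-\beta}\;{}_2F_1\!\left(1-\tfrac{1}{\sigma},\,1;\,2-\beta;\,-\alpha\sigma q\right)\right]+C .$$ In this case $u'(q)=K(1+\alpha\sigma q)^{\beta-\frac1\sigma}q^{-\beta}$.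
   Context: ${}_2F_1(a,b;c;z)=\sum_{n=0}^\infty\frac{(a)_n(b)_n}{(c)_n}\frac{z^n}{n!}$ for $|z|<1$ is the Gauss hypergeometric function, where $(a)_n=a(a+1)\cdots(a+n-1)$, $(a)_0=1$, is the rising Pochhammer symbol. All real powers of positive reals are the real (principal) ones. *)

(* Defs.v *)
From Stdlib Require Import Reals Arith.
From Coquelicot Require Import Coquelicot.
Open Scope R_scope.

Fixpoint poch (a : R) (n : nat) : R :=
  match n with
  | O => 1
  | S k => poch a k * (a + INR k)
  end.

(* Gauss hypergeometric function 2F1(a,b;c;z) as the sum of its power series
   (used only for |z| < 1, where the series converges). *)
Definition hyp2F1 (a b c z : R) : R :=
  Series (fun n => poch a n * poch b n / poch c n * z ^ n / INR (fact n)).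

Definition in_open_interval (a b : Rbar) (q : R) : Prop :=
  Rbar_lt a q /\ Rbar_lt q b.

(* Main.v *)
Require Import Defs.
From Stdlib Require Import Reals Lra Lia Psatz Arith Factorial.
From Coquelicot Require Import Coquelicot.
Open Scope R_scope.

Definition gco (a c : R) (n : nat) : R := poch a n / poch c n.

Lemma poch1 n : poch 1 n = INR (fact n).
Proof.
  induction n as [|n IH]; simpl poch; [simpl; lra|].
  rewrite IH, fact_simpl, mult_INR, S_INR. ring.
Qed.

Lemma poch_pos c n : 0 < c -> 0 < poch c n.
Proof.
  intros Hc; induction n as [|n IH]; simpl; [lra|].
  apply Rmult_lt_0_compat; [exact IH| pose proof (pos_INR n); lra].
Qed.

Lemma hyp_eq a c z : 0 < c -> hyp2F1 a 1 c z = PSeries (gco a c) z.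
Proof.
  intros Hc. unfold hyp2F1, PSeries. apply Series_ext. intros n.
  rewrite poch1. unfold gco. pose proof (poch_pos c n Hc).
  pose proof (INR_fact_neq_0 n). field. lra.
Qed.

Lemma gco_rec a c n : 0 < c ->
  gco a c (S n) * (c + INR n) = gco a c n * (a + INR n).
Proof.
  intros Hc. unfold gco; simpl poch. pose proof (poch_pos c n Hc).
  pose proof (pos_INR n). field. lra.
Qed.

Lemma poch_abs a n : Rabs (poch a n) <= poch (Rabs a + 1) n.
Proof.
  induction n as [|n IH]; simpl poch.
  - rewrite Rabs_R1; lra.
  - rewrite Rabs_mult. apply Rmult_le_compat; try apply Rabs_pos; auto.
    pose proof (pos_INR n). pose proof (Rabs_triang a (INR n)).
    rewrite (Rabs_right (INR n)) in H0; lra.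
Qed.

Lemma lim_ratio A c : 0 < c -> 0 < A ->
  is_lim_seq (fun n => Rabs ((A + INR n) / (c + INR n))) 1.
Proof.
  intros Hc HA.
  apply is_lim_seq_ext with (fun n => 1 + (A - c) * / (c + INR n)).
  { intros n. pose proof (pos_INR n). rewrite Rabs_right.
    field; lra. apply Rle_ge. apply Rdiv_le_0_compat; lra. }
  replace (Finite 1) with (Finite (1 + (A - c) * 0)) by (f_equal; ring).
  apply is_lim_seq_plus'.
  - apply is_lim_seq_const.
  - change (Finite ((A - c) * 0)) with (Rbar_mult (A - c) (Finite 0)).
    apply is_lim_seq_scal_l.
    replace (Finite 0) with (Rbar_inv p_infty) by reflexivity.
    apply is_lim_seq_inv.
    + apply is_lim_seq_plus with (l1 := c) (l2 := p_infty).
      apply is_lim_seq_const. apply is_lim_seq_INR. reflexivity.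
    + discriminate.
Qed.

Lemma disk_g a c r : 0 < c -> Rabs r < 1 -> CV_disk (gco a c) r.
Proof.
  intros Hc Hr.
  set (A := Rabs a + 1).
  assert (HA : 0 < A) by (unfold A; pose proof (Rabs_pos a); lra).
  assert (Hd : CV_disk (gco A c) r).
  { apply CV_disk_DAlembert with 1.
    - intros n. unfold gco. pose proof (poch_pos A n HA). pose proof (poch_pos c n Hc).
      apply Rgt_not_eq. apply Rdiv_lt_0_compat; lra.
    - apply is_lim_seq_ext with (fun n => Rabs ((A + INR n) / (c + INR n))).
      + intros n. f_equal. unfold gco. simpl poch.
        pose proof (poch_pos A n HA). pose proof (poch_pos c n Hc). pose proof (pos_INR n).
        field. repeat split; lra.
      + apply lim_ratio; auto.
    - right. split. lra. rewrite Rinv_1. exact Hr. }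
  unfold CV_disk in *.
  apply (ex_series_le (fun n => Rabs (gco a c n * r ^ n)) (fun n => Rabs (gco A c n * r ^ n))); [|exact Hd].
  intros n. change norm with Rabs. simpl. rewrite Rabs_Rabsolu.
  rewrite !Rabs_mult. apply Rmult_le_compat_r; [apply Rabs_pos|].
  unfold gco. pose proof (poch_pos A n HA). pose proof (poch_pos c n Hc).
  rewrite !Rabs_div by lra. rewrite (Rabs_right (poch c n)) by lra.
  rewrite (Rabs_right (poch A n)) by lra.
  apply Rmult_le_compat_r. left; apply Rinv_0_lt_compat; lra. apply poch_abs.
Qed.

Lemma rad_g a c z : 0 < c -> Rabs z < 1 -> Rbar_lt (Rabs z) (CV_radius (gco a c)).
Proof.
  intros Hc Hz.
  set (r := (Rabs z + 1) / 2).
  assert (Hr : Rabs r < 1 /\ Rabs z < r).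
  { unfold r. pose proof (Rabs_pos z). rewrite Rabs_right; lra. }
  assert (H := disk_g a c r Hc (proj1 Hr)).
  destruct (Lub_Rbar_correct (CV_disk (gco a c))) as [Hub _].
  specialize (Hub r H). fold (CV_radius (gco a c)) in Hub.
  destruct (CV_radius (gco a c)) as [R| |]; simpl in *; try tauto.
  pose proof (Rle_abs r). lra.
Qed.

Lemma ser_g a c z : 0 < c -> Rabs z < 1 ->
  is_series (fun n => gco a c n * z ^ n) (PSeries (gco a c) z).
Proof.
  intros Hc Hz. apply Series_correct. apply ex_series_Rabs. apply disk_g; auto.
Qed.

Lemma ser_dg a c z : 0 < c -> Rabs z < 1 ->
  is_series (fun n => PS_derive (gco a c) n * z ^ n) (PSeries (PS_derive (gco a c)) z).
Proof.
  intros Hc Hz. apply Series_correct. apply ex_series_Rabs. apply CV_disk_inside.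
  rewrite CV_radius_derive. apply rad_g; auto.
Qed.

Lemma ode_g a c z : 0 < c -> Rabs z < 1 ->
  z * PSeries (PS_derive (gco a c)) z + (c-1)*(PSeries (gco a c) z - 1)
  = a*z*PSeries (gco a c) z + z*z*PSeries (PS_derive (gco a c)) z.
Proof.
  intros Hc Hz.
  set (G := PSeries (gco a c) z). set (D := PSeries (PS_derive (gco a c)) z).
  set (g := gco a c).
  assert (HG := ser_g a c z Hc Hz). fold G g in HG.
  assert (HD := ser_dg a c z Hc Hz). fold D g in HD.
  assert (g0 : g 0%nat = 1) by (unfold g, gco; simpl; field).
  assert (HB : is_series (fun n => g (S n) * z ^ (S n)) (G - 1)).
  { apply (is_series_incr_1 (fun n => g n * z ^ n)).
    match goal with |- is_series _ ?l => replace l with G; [exact HG|] end.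
    rewrite g0. unfold plus; simpl. ring. }
  assert (HzD : is_series (fun n => z * (PS_derive g n * z ^ n)) (z * D)).
  { apply (is_series_scal_l z _ D HD). }
  assert (HT : is_series (fun n => INR n * g n * z ^ n) (z * D)).
  { apply is_series_decr_1.
    match goal with |- is_series _ ?l => replace l with (z * D)
      by (unfold plus, opp; simpl; ring) end.
    apply is_series_ext with (2 := HzD). intros n. unfold PS_derive. simpl. ring. }
  assert (HL : is_series (fun n => z * (PS_derive g n * z ^ n) + (c - 1) * (g (S n) * z ^ (S n)))
                 (z * D + (c - 1) * (G - 1))).
  { apply (is_series_plus _ _ (z * D) ((c-1)*(G-1))); auto.
    apply (is_series_scal_l (c-1) _ (G-1) HB). }
  assert (HR : is_series (fun n => z * (a * (g n * z ^ n)) + z * (INR n * g n * z ^ n))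
                 (z * (a * G) + z * (z * D))).
  { apply (is_series_plus _ _ (z * (a * G)) (z * (z * D))).
    apply (is_series_scal_l z _ (a * G)). apply (is_series_scal_l a _ G HG).
    apply (is_series_scal_l z _ (z * D) HT). }
  assert (E : z * D + (c - 1) * (G - 1) = z * (a * G) + z * (z * D)).
  { rewrite <- (is_series_unique _ _ HL). apply is_series_unique.
    apply is_series_ext with (2 := HR). intros n.
    unfold PS_derive. unfold g. pose proof (gco_rec a c n Hc).
    rewrite S_INR. simpl pow. lazymatch goal with |- ?x = ?y => change (@eq Rdefinitions.R x y) end. replace (z * (a * (gco a c n * z ^ n)) + z * (INR n * gco a c n * z ^ n)) with (z * z ^ n * (gco a c n * (a + INR n))) by ring. rewrite <- H. ring. }
  lra.
Qed.

Definition Uf (alpha beta sigma K C : R) (q : R) : R :=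
  K * sigma / (sigma - 1)
                * Rpower (1 + alpha * sigma * q) (beta - 1 / sigma)
                * Rpower q (1 - beta)
                * (1 + (beta - 1 / sigma) / (1 - beta)
                       * hyp2F1 (1 - 1 / sigma) 1 (2 - beta) (- (alpha * sigma * q)))
              + C.

Definition phi (alpha beta sigma : R) (q : R) : R :=
  Rpower (1 + alpha * sigma * q) (beta - 1 / sigma) * Rpower q (- beta).

Lemma derF alpha beta sigma K C q :
  0 < beta < 1 -> sigma <> 0 -> sigma <> 1 -> 0 < q ->
  0 < 1 + alpha * sigma * q -> Rabs (alpha * sigma * q) < 1 ->
  is_derive (Uf alpha beta sigma K C) q (K * phi alpha beta sigma q).
Proof.
  intros Hb Hs0 Hs1 Hq Hx Hax.
  set (g := gco (1 - 1 / sigma) (2 - beta)).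
  assert (Hc : 0 < 2 - beta) by lra.
  apply is_derive_ext with (fun q => K * sigma / (sigma - 1)
                * exp ((beta - 1 / sigma) * ln (1 + alpha * sigma * q))
                * exp ((1 - beta) * ln q)
                * (1 + (beta - 1 / sigma) / (1 - beta)
                       * PSeries g (- (alpha * sigma * q))) + C).
  { intros t. unfold Uf, Rpower. rewrite hyp_eq by exact Hc. reflexivity. }
  assert (Hz : Rabs (- (alpha * sigma * q)) < 1) by (rewrite Rabs_Ropp; exact Hax).
  assert (Hrad := rad_g (1 - 1/sigma) (2 - beta) _ Hc Hz). fold g in Hrad.
  auto_derive.
  { repeat split; auto. exists (PSeries (PS_derive g) (- (alpha * sigma * q))).
    apply is_derive_PSeries; exact Hrad. }
  replace (Derive (fun x : R => PSeries g x) (- (alpha * sigma * q)))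
    with (PSeries (PS_derive g) (- (alpha * sigma * q)))
    by (symmetry; apply Derive_PSeries; exact Hrad).
  assert (Hode := ode_g (1 - 1/sigma) (2 - beta) _ Hc Hz). fold g in Hode.
  unfold phi, Rpower.
  replace (exp ((1 - beta) * ln q)) with (q * exp (- beta * ln q)).
  2:{ replace ((1 - beta) * ln q) with (ln q + - beta * ln q) by ring.
      rewrite exp_plus, exp_ln by exact Hq. reflexivity. }
  set (E := exp ((beta - 1 / sigma) * ln (1 + alpha * sigma * q))) in *.
  set (Qb := exp (- beta * ln q)).
  set (G := PSeries g (- (alpha * sigma * q))) in *.
  set (D := PSeries (PS_derive g) (- (alpha * sigma * q))) in *.
  set (z := - (alpha * sigma * q)) in *.
  apply Rminus_diag_uniq.
  set (ODE := - (alpha * sigma * q) * D + (2 - beta - 1) * (G - 1) - ((1 - 1 / sigma) * - (alpha * sigma * q) * G + - (alpha * sigma * q) * - (alpha * sigma * q) * D)).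
  assert (HO : ODE = 0) by (unfold ODE, z in *; lra).
  transitivity (K * sigma / (sigma - 1) * E * Qb * ((beta - 1 / sigma) / (1 - beta)) / (1 + alpha * sigma * q) * ODE).
  2:{ rewrite HO. ring. }
  unfold ODE, z. field. repeat split; lra.
Qed.

Lemma Jloc a b q : in_open_interval a b q -> locally q (in_open_interval a b).
Proof.
  intros H. apply (locally_open (T := R_UniformSpace) (fun x : R => Rbar_lt a x /\ Rbar_lt x b)); auto.
  apply open_and; [apply open_Rbar_gt | apply open_Rbar_lt].
Qed.

Lemma Jconv a b p r y : in_open_interval a b p -> in_open_interval a b r ->
  p <= y <= r -> in_open_interval a b y.
Proof.
  intros [H1 H2] [H3 H4] Hy. split.
  - apply Rbar_lt_le_trans with p; auto. simpl; lra.
  - apply Rbar_le_lt_trans with r; auto. simpl; lra.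
Qed.

Lemma Jpos a b q : Rbar_le (Finite 0) a -> in_open_interval a b q -> 0 < q.
Proof.
  intros H [H1 _]. assert (Rbar_lt 0 q) by (apply Rbar_le_lt_trans with a; auto).
  exact H0.
Qed.

Lemma Jne a b : Rbar_lt a b -> Rbar_le (Finite 0) a -> exists q, in_open_interval a b q.
Proof.
  intros Hab H0. destruct a as [a| |]; destruct b as [b| |]; simpl in *; try tauto.
  - exists ((a + b) / 2). split; simpl; lra.
  - exists (a + 1). split; simpl; lra.
Qed.

Lemma Jconst a b (f : R -> R) p r :
  (forall y, in_open_interval a b y -> is_derive f y 0) ->
  in_open_interval a b p -> in_open_interval a b r -> f p = f r.
Proof.
  intros Hd Hp Hr.
  assert (HJ : forall y, Rmin p r <= y <= Rmax p r -> in_open_interval a b y).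
  { intros y Hy. destruct (Rle_dec p r).
    - rewrite Rmin_left, Rmax_right in Hy by lra. apply Jconv with p r; auto.
    - rewrite Rmin_right, Rmax_left in Hy by lra. apply Jconv with r p; auto. }
  destruct (MVT_gen f p r (fun _ => 0)) as [c [_ Hc]].
  - intros x Hx. apply Hd. apply HJ. lra.
  - intros x Hx. apply continuity_pt_filterlim. apply (ex_derive_continuous (K := R_AbsRing) (V := R_NormedModule)).
    exists 0. apply Hd. apply HJ. exact Hx.
  - lra.
Qed.

Lemma dphi alpha beta sigma q : sigma <> 0 -> 0 < q -> 0 < 1 + alpha * sigma * q ->
  is_derive (phi alpha beta sigma) q
    (phi alpha beta sigma q * ((beta - 1 / sigma) * (alpha * sigma) / (1 + alpha * sigma * q) - beta / q)).
Proof.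
  intros Hs Hq Hx. unfold phi, Rpower. auto_derive.
  - repeat split; auto.
  - field. repeat split; lra.
Qed.

Lemma phi_pos alpha beta sigma q : 0 < phi alpha beta sigma q.
Proof. unfold phi, Rpower. apply Rmult_lt_0_compat; apply exp_pos. Qed.

Lemma part2 alpha beta sigma (a b : Rbar) (u : R -> R) K C :
  0 < beta < 1 -> sigma <> 0 -> sigma <> 1 -> Rbar_le (Finite 0) a ->
  (forall q, in_open_interval a b q ->
     0 < 1 + alpha * sigma * q /\ Rabs (alpha * sigma * q) < 1) ->
  (forall q, in_open_interval a b q -> u q = Uf alpha beta sigma K C q) ->
  forall q, in_open_interval a b q -> Derive u q = K * phi alpha beta sigma q.
Proof.
  intros Hb Hs0 Hs1 Ha HJ Hu q Hq.
  rewrite (Derive_ext_loc u (Uf alpha beta sigma K C)).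
  - apply is_derive_unique. destruct (HJ q Hq). apply derF; auto. eapply Jpos; eauto.
  - generalize (Jloc a b q Hq). apply filter_imp. intros y Hy. apply Hu; auto.
Qed.

Theorem theorem1 (alpha beta sigma : R) (a b : Rbar) (u : R -> R) :
  0 < beta < 1 ->
  sigma <> 0 -> sigma <> 1 ->
  Rbar_lt a b ->
  Rbar_le (Finite 0) a ->
  (forall q, in_open_interval a b q ->
     0 < 1 + alpha * sigma * q /\ Rabs (alpha * sigma * q) < 1) ->
  (forall q, in_open_interval a b q ->
     ex_derive u q /\ ex_derive (Derive u) q) ->
  (forall q, in_open_interval a b q -> 0 < Derive u q) ->
  ((forall q, in_open_interval a b q ->
      - (q * Derive (Derive u) q) / Derive u q
        = (alpha * q + beta) / (alpha * sigma * q + 1))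
   <->
   (exists K C : R, 0 < K /\
      forall q, in_open_interval a b q ->
        u q = K * sigma / (sigma - 1)
                * Rpower (1 + alpha * sigma * q) (beta - 1 / sigma)
                * Rpower q (1 - beta)
                * (1 + (beta - 1 / sigma) / (1 - beta)
                       * hyp2F1 (1 - 1 / sigma) 1 (2 - beta) (- (alpha * sigma * q)))
              + C))
  /\
  (forall K C : R, 0 < K ->
     (forall q, in_open_interval a b q ->
        u q = K * sigma / (sigma - 1)
                * Rpower (1 + alpha * sigma * q) (beta - 1 / sigma)
                * Rpower q (1 - beta)
                * (1 + (beta - 1 / sigma) / (1 - beta)
                       * hyp2F1 (1 - 1 / sigma) 1 (2 - beta) (- (alpha * sigma * q)))
              + C) ->
     forall q, in_open_interval a b q ->
       Derive u q = K * Rpower (1 + alpha * sigma * q) (beta - 1 / sigma)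
                      * Rpower q (- beta)).
Proof.
  intros Hb Hs0 Hs1 Hab Ha HJ Hdu Hpos.
  split; [split|].
  - intros Hode.
    set (w := fun y => Derive u y / phi alpha beta sigma y).
    assert (Hw : forall y, in_open_interval a b y -> is_derive w y 0).
    { intros y Hy. destruct (HJ y Hy) as [Hx _]. assert (Hq := Jpos _ _ _ Ha Hy).
      destruct (Hdu y Hy) as [_ H2].
      assert (Hp := phi_pos alpha beta sigma y).
      assert (Hu := Hpos y Hy).
      eapply is_derive_ext. { intros t. reflexivity. }
      unfold w. 
      match goal with |- is_derive _ _ ?l => replace l with
        ((Derive (Derive u) y * phi alpha beta sigma y - Derive u y *
          (phi alpha beta sigma y * ((beta - 1 / sigma) * (alpha * sigma) / (1 + alpha * sigma * y) - beta / y)))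
          / phi alpha beta sigma y ^ 2) end.
      - apply is_derive_div; [apply Derive_correct; exact H2 | apply dphi; auto | lra].
      - specialize (Hode y Hy).
        assert (Hu2 : Derive (Derive u) y = - ((alpha * y + beta) / (alpha * sigma * y + 1)) * Derive u y / y).
        { rewrite <- Hode. field. lra. }
        rewrite Hu2. field. repeat split; lra. }
    destruct (Jne a b Hab Ha) as [q0 Hq0].
    set (K := w q0).
    assert (HK : 0 < K).
    { unfold K, w. apply Rdiv_lt_0_compat; [apply Hpos; auto | apply phi_pos]. }
    assert (HuK : forall y, in_open_interval a b y -> Derive u y = K * phi alpha beta sigma y).
    { intros y Hy. assert (E := Jconst a b w q0 y Hw Hq0 Hy). unfold K; rewrite E.
      unfold w. pose proof (phi_pos alpha beta sigma y). field. lra. }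
    set (h := fun y => u y - Uf alpha beta sigma K 0 y).
    assert (Hh : forall y, in_open_interval a b y -> is_derive h y 0).
    { intros y Hy. destruct (HJ y Hy) as [Hx Hax]. assert (Hq := Jpos _ _ _ Ha Hy).
      destruct (Hdu y Hy) as [H1 _].
      replace 0 with (Derive u y - K * phi alpha beta sigma y) by (rewrite HuK; auto; ring).
      apply (is_derive_minus u (Uf alpha beta sigma K 0)).
      apply Derive_correct; exact H1. apply derF; auto. }
    exists K, (h q0). split; auto.
    intros q Hq. assert (E := Jconst a b h q0 q Hh Hq0 Hq).
    rewrite E. unfold h, Uf. ring.
  - intros [K [C [HK Hu]]] q Hq.
    assert (Hd := part2 alpha beta sigma a b u K C Hb Hs0 Hs1 Ha HJ Hu).
    destruct (HJ q Hq) as [Hx _]. assert (Hqp := Jpos _ _ _ Ha Hq).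
    rewrite (Derive_ext_loc (Derive u) (fun y => K * phi alpha beta sigma y)).
    2:{ generalize (Jloc a b q Hq). apply filter_imp. intros y Hy. apply Hd; auto. }
    assert (HD2 : Derive (fun y : R_UniformSpace => K * phi alpha beta sigma y) q = K * (phi alpha beta sigma q * ((beta - 1 / sigma) * (alpha * sigma) / (1 + alpha * sigma * q) - beta / q))) by (apply is_derive_unique; apply is_derive_scal, dphi; auto). rewrite HD2.
    rewrite Hd by auto.
    pose proof (phi_pos alpha beta sigma q). field. repeat split; lra.
  - intros K C HK Hu q Hq.
    rewrite (part2 alpha beta sigma a b u K C Hb Hs0 Hs1 Ha HJ Hu q Hq).
    unfold phi. ring.
Qed.
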